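(* Let $\tau=(1+\sqrt5)/2$, $E=\mathbb{Q}(i,\sqrt5)$ with ring of integers $\mathcal{O}_E=\mathbb{Z}[i,\tau]$, and $\alpha=2+\sqrt5$. For each integer $n>0$ define integers $a_n,b_n$ by $a_n-b_n\sqrt5=(2-\sqrt5)^n$, and put $z_n=a_n+i\sqrt5\,b_n\in\mathcal{O}_E$. Let $$p_1(x)=x^2+i(1-\tau)x-1,\quad p_2(x)=x^2-i(1-\tau)x-1,\quad p_3(x)=x^2+i\tau x-1,\quad p_4(x)=x^2-i\tau x-1,$$ and for $j=1,2,3,4$ set $m_j(n)=\alpha^{-2n}p_j(\alpha^{2n})\in\mathcal{O}_E$. Then for every integer $n>0$, $z_n$ divides $z_{5n}$ in $\mathcal{O}_E$; more precisely, $$z_{5n}=z_n\,m_2(n)\,m_4(n)\quad\text{if } n \text{ is odd},\qquad z_{5n}=z_n\,m_1(n)\,m_3(n)\quad\text{if } n \text{ is even}.$$ *)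

(* Defs.v *)
(* E = Q(i, sqrt 5) is realised inside algC (algebraic complex numbers). *)
From HB Require Import structures.
From mathcomp Require Import all_boot all_order all_algebra all_field.
Set Implicit Arguments. Unset Strict Implicit. Unset Printing Implicit Defensive.
Import Order.TTheory GRing.Theory Num.Theory.
Local Open Scope ring_scope.

Definition sqrt5 : algC := sqrtC 5.
Definition tau : algC := (1 + sqrt5) / 2.
Definition alpha : algC := 2 + sqrt5.

(* O_E = Z[i, tau]; since i^2 = -1 and tau^2 = tau + 1, this ring is the
   Z-span of 1, i, tau, i*tau. *)
Definition inOE (x : algC) : Prop :=
  exists a b c d : int, x = a%:~R + b%:~R * 'i + c%:~R * tau + d%:~R * ('i * tau).

Definition dvdOE (x y : algC) : Prop := exists w, inOE w /\ y = x * w.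

Definition p1 : {poly algC} := 'X^2 + ('i * (1 - tau))%:P * 'X - 1.
Definition p2 : {poly algC} := 'X^2 - ('i * (1 - tau))%:P * 'X - 1.
Definition p3 : {poly algC} := 'X^2 + ('i * tau)%:P * 'X - 1.
Definition p4 : {poly algC} := 'X^2 - ('i * tau)%:P * 'X - 1.

Definition mpol (p : {poly algC}) (n : nat) : algC :=
  alpha ^- (2 * n) * p.[alpha ^+ (2 * n)].

Definition zof (a b : int) : algC := a%:~R + 'i * sqrt5 * b%:~R.

(* Main.v *)
Require Import Defs.
From mathcomp Require Import all_boot all_order all_algebra all_field.
From mathcomp Require Import ring lra zify.
Import Order.TTheory GRing.Theory Num.Theory.
Local Open Scope ring_scope.

Lemma s2 : sqrt5 ^+ 2 = 5.
Proof. by rewrite /sqrt5 sqrtCK. Qed.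

Lemma nat_irr (a b : nat) : (a ^ 2 = 5 * b ^ 2)%N -> b = 0%N.
Proof.
move=> h; case: (posnP b) => // bp.
have ap : (0 < a)%N.
  case: (posnP a) => // a0; move: h; rewrite a0 => h. 
  have : (0 < 5 * b ^ 2)%N by rewrite muln_gt0 expn_gt0 bp.
  by rewrite -h.
have := congr1 (logn 5) h.
rewrite lognX lognM ?expn_gt0 ?bp // lognX (logn_prime 5 (isT : prime 5)) eqxx.
lia.
Qed.

Lemma irr (x y : int) : x%:~R = y%:~R * sqrt5 -> y = 0.
Proof.
move=> h.
have h2 : (x ^+ 2)%:~R = (5 * y ^+ 2)%:~R :> algC.
  by rewrite intrM !rmorphXn /= h exprMn s2 mulrC.
have h3 := intr_inj h2.
have h4 : ((`|x| ^ 2)%N = 5 * `|y| ^ 2)%N.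
  by have := congr1 absz h3; rewrite abszM !abszX.
have := nat_irr _ _ h4. by move/eqP; rewrite absz_eq0 => /eqP.
Qed.

Fixpoint AB (n : nat) : int * int :=
  if n is n'.+1 then let: (a, b) := AB n' in (2 * a + 5 * b, a + 2 * b) else (1, 0).

Lemma ABeq n : (AB n).1%:~R + (AB n).2%:~R * sqrt5 = alpha ^+ n /\
               (AB n).1%:~R - (AB n).2%:~R * sqrt5 = (2 - sqrt5) ^+ n.
Proof.
elim: n => [|n [IH1 IH2]] /=; first by split; rewrite expr0 mul0r ?addr0 ?subr0.
move: IH1 IH2; case: (AB n) => a b /= IH1 IH2.
rewrite !exprS -IH1 -IH2 /alpha !intrD !intrM.
have e2 : (2%:Z)%:~R = 2 :> algC by [].
have e5 : (5%:Z)%:~R = 5 :> algC by [].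
rewrite e2 e5.
by split; rewrite -[5 in LHS]s2; ring.
Qed.

Lemma uniq_ab (a b c d : int) : a%:~R - b%:~R * sqrt5 = c%:~R - d%:~R * sqrt5 -> a = c /\ b = d.
Proof.
move=> h.
have h' : (a - c)%:~R = (b - d)%:~R * sqrt5 :> algC.
  by rewrite !intrD !intrN mulrDl mulNr; apply/eqP; rewrite -subr_eq0;
     apply/eqP; move/eqP: h; rewrite -subr_eq0 => /eqP <-; ring.
have bd := irr _ _ h'. move/eqP: bd; rewrite subr_eq0 => /eqP bd; subst d.
move: h' ; rewrite subrr mul0r => /eqP; rewrite intr_eq0 subr_eq0 => /eqP ->; by [].
Qed.

Lemma alpha_neq0 : alpha != 0.
Proof.
apply/eqP => h.
have : alpha * (2 - sqrt5) = -1.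
  rewrite /alpha.
  have -> : (2 + sqrt5) * (2 - sqrt5) = 4 - sqrt5 ^+ 2 by ring.
  by rewrite s2; ring.
by rewrite h mul0r => /eqP; rewrite eq_sym oppr_eq0 oner_eq0.
Qed.

Lemma betaE m : (2 - sqrt5) ^+ m = (-1) ^+ (odd m) * (alpha ^+ m)^-1.
Proof.
have ab : alpha * (2 - sqrt5) = -1.
  rewrite /alpha.
  have -> : (2 + sqrt5) * (2 - sqrt5) = 4 - sqrt5 ^+ 2 by ring.
  by rewrite s2; ring.
have hm : (alpha ^+ m) * (2 - sqrt5) ^+ m = (-1) ^+ (odd m).
  by rewrite -exprMn ab signr_odd.
have nz : alpha ^+ m != 0 by rewrite expf_neq0 // alpha_neq0.
rewrite -hm; field; exact: nz.
Qed.

Lemma ABx m : (AB m).1%:~R = (alpha ^+ m + (-1) ^+ (odd m) * (alpha ^+ m)^-1) / 2 /\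
              (AB m).2%:~R * sqrt5 = (alpha ^+ m - (-1) ^+ (odd m) * (alpha ^+ m)^-1) / 2.
Proof.
have [h1 h2] := ABeq m. rewrite betaE in h2.
rewrite -h2 -h1. by split; field.
Qed.

Lemma zofE a b : zof a b = a%:~R + 'i * (b%:~R * sqrt5).
Proof. by rewrite /zof; ring. Qed.

Lemma hs : sqrt5 = 2 * tau - 1.
Proof. by rewrite /tau; field. Qed.

Lemma ht : tau - tau ^+ 2 = -1.
Proof.
rewrite /tau.
have -> : (1 + sqrt5) / 2 - ((1 + sqrt5) / 2) ^+ 2 = (1 - sqrt5 ^+ 2) / 4 by field.
by rewrite s2; field.
Qed.

Lemma fud : 'i ^+ 2 + 1 = 0 :> algC.
Proof. by rewrite sqrCi addNr. Qed.

Lemma c2 : (2%:Z)%:~R = 2 :> algC. Proof. by []. Qed.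
Lemma c4 : (4%:Z)%:~R = 4 :> algC. Proof. by []. Qed.
Lemma c20 : (20%:Z)%:~R = 20 :> algC. Proof. by []. Qed.

Theorem lemma3p1 (n : nat) (an bn a5n b5n : int) :
  (0 < n)%N ->
  an%:~R - bn%:~R * sqrt5 = (2 - sqrt5) ^+ n ->
  a5n%:~R - b5n%:~R * sqrt5 = (2 - sqrt5) ^+ (5 * n) ->
  [/\ inOE (mpol p1 n), inOE (mpol p2 n), inOE (mpol p3 n) & inOE (mpol p4 n)] /\
  [/\ dvdOE (zof an bn) (zof a5n b5n),
      (odd n -> zof a5n b5n = zof an bn * mpol p2 n * mpol p4 n) &
      (~~ odd n -> zof a5n b5n = zof an bn * mpol p1 n * mpol p3 n)].
Proof.
move=> n0 ha h5.
have [an_ bn_] : an = (AB n).1 /\ bn = (AB n).2.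
  by apply: uniq_ab; rewrite ha (proj2 (ABeq n)).
have [a5_ b5_] : a5n = (AB (5 * n)).1 /\ b5n = (AB (5 * n)).2.
  by apply: uniq_ab; rewrite h5 (proj2 (ABeq (5 * n))).
subst an bn a5n b5n.
set B := (AB (2 * n)).2.
have [_ Hb2] := ABx (2 * n).
rewrite -/B in Hb2.
have o2 : odd (2 * n) = false by rewrite oddM.
rewrite o2 expr0 mul1r in Hb2.
pose y : algC := alpha ^+ (2 * n) - (alpha ^+ (2 * n))^-1.
have hy : y = 2 * (B%:~R * sqrt5).
  by rewrite Hb2 /y; move: (alpha ^+ _ - _) => t; field.
have nz2 : alpha ^+ (2 * n) != 0 by rewrite expf_neq0 // alpha_neq0.
have hm1 : mpol p1 n = y + 'i * (1 - tau) by rewrite /mpol /p1 !hornerE /y; field.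
have hm2 : mpol p2 n = y - 'i * (1 - tau) by rewrite /mpol /p2 !hornerE /y; field.
have hm3 : mpol p3 n = y + 'i * tau by rewrite /mpol /p3 !hornerE /y; field.
have hm4 : mpol p4 n = y - 'i * tau by rewrite /mpol /p4 !hornerE /y; field.
have p13 : (y + 'i * (1 - tau)) * (y + 'i * tau) = y ^+ 2 + 'i * y + 1.
  transitivity (y ^+ 2 + 'i * y + 'i ^+ 2 * (tau - tau ^+ 2)); first by ring.
  by rewrite sqrCi ht; ring.
have p24 : (y - 'i * (1 - tau)) * (y - 'i * tau) = y ^+ 2 - 'i * y + 1.
  transitivity (y ^+ 2 - 'i * y + 'i ^+ 2 * (tau - tau ^+ 2)); first by ring.
  by rewrite sqrCi ht; ring.
split.
  split.
  - rewrite hm1 hy hs; exists (- (2 * B)), 1, (4 * B), (-1).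
    rewrite !(intrM, intrN) c2 c4; ring.
  - rewrite hm2 hy hs; exists (- (2 * B)), (-1), (4 * B), 1.
    rewrite !(intrM, intrN) c2 c4; ring.
  - rewrite hm3 hy hs; exists (- (2 * B)), 0, (4 * B), 1.
    rewrite !(intrM, intrN) c2 c4; ring.
  - rewrite hm4 hy hs; exists (- (2 * B)), 0, (4 * B), (-1).
    rewrite !(intrM, intrN) c2 c4; ring.
have [Ha Hb] := ABx n.
have [Ha5 Hb5] := ABx (5 * n).
have o5 : odd (5 * n) = odd n by rewrite oddM.
rewrite o5 in Ha5 Hb5.
have e5 : alpha ^+ (5 * n) = (alpha ^+ n) ^+ 5 by rewrite mulnC exprM.
have e2 : alpha ^+ (2 * n) = (alpha ^+ n) ^+ 2 by rewrite mulnC exprM.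
rewrite e5 in Ha5 Hb5.
have nz : alpha ^+ n != 0 by rewrite expf_neq0 // alpha_neq0.
have Hodd : odd n -> zof (AB (5 * n)).1 (AB (5 * n)).2 = zof (AB n).1 (AB n).2 * mpol p2 n * mpol p4 n.
  move=> on; rewrite -mulrA hm2 hm4 p24 !zofE Ha Hb Ha5 Hb5 /y e2 on.
  set x := alpha ^+ n in nz *.
  rewrite /= expr1.
  clearbody x.
  set R := (X in _ = X).
  apply: (@eq_trans _ _ (R + ('i ^+ 2 + 1) * (((x - (-1) / x) / 2) * (x ^+ 2 - x ^- 2))));
    last by rewrite fud mul0r addr0.
  rewrite /R; field; exact: nz.
have Hev : ~~ odd n -> zof (AB (5 * n)).1 (AB (5 * n)).2 = zof (AB n).1 (AB n).2 * mpol p1 n * mpol p3 n.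
  move=> /negbTE on; rewrite -mulrA hm1 hm3 p13 !zofE Ha Hb Ha5 Hb5 /y e2 on.
  set x := alpha ^+ n in nz *.
  rewrite /= expr0.
  clearbody x.
  set R := (X in _ = X).
  apply: (@eq_trans _ _ (R - ('i ^+ 2 + 1) * (((x - 1 / x) / 2) * (x ^+ 2 - x ^- 2))));
    last by rewrite fud mul0r subr0.
  rewrite /R; field; exact: nz.
split => //.
have hsq : (2 * (B%:~R * sqrt5)) ^+ 2 = 4 * B%:~R ^+ 2 * sqrt5 ^+ 2 :> algC by ring.
case: (boolP (odd n)) => on.
  exists (mpol p2 n * mpol p4 n); split; last by rewrite mulrA Hodd.
  rewrite hm2 hm4 p24 hy hsq s2 hs.
  exists (20 * (B * B) + 1), (2 * B), 0, (- (4 * B)).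
  rewrite !(intrD, intrM, intrN) ?c2 ?c4 ?c20; ring.
exists (mpol p1 n * mpol p3 n); split; last by rewrite mulrA Hev.
rewrite hm1 hm3 p13 hy hsq s2 hs.
exists (20 * (B * B) + 1), (- (2 * B)), 0, (4 * B).
rewrite !(intrD, intrM, intrN) ?c2 ?c4 ?c20; ring.
Qed.
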